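(* Let $D$ be an integral domain with quotient field $K$, $n\ge1$, and $f\in(T_n(K))[x]$. Then $f(C)\in T_n(D)$ for all $C\in T_n(D)$ if and only if $f_{ij}\in\mathrm{Int}_K(T_{n-j+1}(D))$ for all $1\le i\le j\le n$; and $f(C)_\ell\in T_n(D)$ for all $C\in T_n(D)$ if and only if $f_{ij}\in\mathrm{Int}_K(T_i(D))$ for all $1\le i\le j\le n$. Equivalently, under the identification of $(T_n(K))[x]$ with $T_n(K[x])$ via $f\mapsto(f_{ij})$, $\mathrm{Int}_{T_n(K)}(T_n(D))$ is the set of upper triangular matrices whose $(i,j)$-entry ($i\le j$) lies in $\mathrm{Int}_K(T_{n-j+1}(D))$, and $\mathrm{Int}^{\ell}_{T_n(K)}(T_n(D))$ is the set of upper triangular matrices whose $(i,j)$-entry ($i\le j$) lies in $\mathrm{Int}_K(T_i(D))$.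
   Context: $T_n(A)$ denotes the ring of upper triangular $n\times n$ matrices over a ring $A$. For $f=\sum_k F_kx^k\in(T_n(K))[x]$ with $F_k\in T_n(K)$, right substitution is $f(C)=\sum_kF_kC^k$ and left substitution is $f(C)_\ell=\sum_kC^kF_k$. Writing $f_{ij}^{(k)}$ for the $(i,j)$-entry of $F_k$, set $f_{ij}=\sum_k f_{ij}^{(k)}x^k\in K[x]$; the map $f\mapsto(f_{ij})$ is a ring isomorphism $(T_n(K))[x]\to T_n(K[x])$. For $m\ge1$, $\mathrm{Int}_K(T_m(D))=\{g\in K[x]\mid\forall C\in T_m(D):\ g(C)\in T_m(D)\}$ (usual evaluation). $\mathrm{Int}_{T_n(K)}(T_n(D))=\{f\in(T_n(K))[x]\mid\forall C\in T_n(D):\ f(C)\in T_n(D)\}$ and $\mathrm{Int}^{\ell}_{T_n(K)}(T_n(D))=\{f\in(T_n(K))[x]\mid\forall C\in T_n(D):\ f(C)_\ell\in T_n(D)\}$. *)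

(* Defs.v *)
From HB Require Import structures.
From mathcomp Require Import all_boot all_order all_algebra.
Set Implicit Arguments. Unset Strict Implicit. Unset Printing Implicit Defensive.
Import Order.TTheory GRing.Theory Num.Theory.
Local Open Scope ring_scope.

Definition inD (D : idomainType) (x : {fraction D}) : Prop :=
  exists d : D, x = FracField.tofrac d.

Definition upper_tri (R : pzRingType) (m : nat) (A : 'M[R]_m) : Prop :=
  forall i j : 'I_m, (j < i)%N -> A i j = 0.

Definition inTD (D : idomainType) (m : nat) (A : 'M[{fraction D}]_m) : Prop :=
  upper_tri A /\ forall i j, inD (A i j).

Definition peval_mx (K : fieldType) (m : nat) (g : {poly K}) (C : 'M[K]_m)
  : 'M[K]_m := \sum_(k < size g) g`_k *: C ^+ k.

Definition IntK (D : idomainType) (m : nat) (g : {poly {fraction D}}) : Prop :=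
  forall C : 'M[{fraction D}]_m, inTD C -> inTD (peval_mx g C).

Definition rsubst (R : nzRingType) (f : {poly R}) (C : R) : R :=
  \sum_(k < size f) f`_k * C ^+ k.

Definition lsubst (R : nzRingType) (f : {poly R}) (C : R) : R :=
  \sum_(k < size f) C ^+ k * f`_k.

Definition entry_poly (K : fieldType) (n : nat) (f : {poly 'M[K]_n.+1})
  (i j : 'I_n.+1) : {poly K} :=
  \poly_(k < size f) (f`_k i j).

(* Main.v *)
Require Import Defs.
From HB Require Import structures.
From mathcomp Require Import all_boot all_order all_algebra.
From mathcomp Require Import zify.
Import GRing.Theory.
Local Open Scope ring_scope.
Set Implicit Arguments. Unset Strict Implicit. Unset Printing Implicit Defensive.

Definition mxn (R : pzRingType) (p : nat) (A : 'M[R]_p) (x y : nat) : R :=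
  if (insub x : option 'I_p) is Some i then
    if (insub y : option 'I_p) is Some j then A i j else 0 else 0.

Lemma mxnE (R : pzRingType) p (A : 'M[R]_p) (i j : 'I_p) : mxn A i j = A i j.
Proof. by rewrite /mxn !valK. Qed.

Lemma mxn_outl (R : pzRingType) p (A : 'M[R]_p) x y : (p <= x)%N -> mxn A x y = 0.
Proof. by move=> h; rewrite /mxn insubF // ltnNge h. Qed.

Lemma mxn_outr (R : pzRingType) p (A : 'M[R]_p) x y : (p <= y)%N -> mxn A x y = 0.
Proof. by move=> h; rewrite /mxn; case: insub => // i; rewrite insubF // ltnNge h. Qed.

Lemma mxn_ord (R : pzRingType) p (A : 'M[R]_p) x y (hx : (x < p)%N) (hy : (y < p)%N) :
  mxn A x y = A (Ordinal hx) (Ordinal hy).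
Proof. exact: (mxnE A (Ordinal hx) (Ordinal hy)). Qed.

Lemma mxn_ut (R : pzRingType) p (A : 'M[R]_p) x y :
  upper_tri A -> (y < x)%N -> mxn A x y = 0.
Proof.
move=> hA hxy; case: (ltnP x p) => hx; last exact: mxn_outl.
case: (ltnP y p) => hy; last exact: mxn_outr.
by rewrite (mxn_ord _ hx hy) hA.
Qed.

Lemma mxn_mul (R : pzRingType) p (A B : 'M[R]_p) x y : (x < p)%N -> (y < p)%N ->
  mxn (A * B) x y = \sum_(z < p) mxn A x z * mxn B z y.
Proof.
move=> hx hy; pose i := Ordinal hx; pose j := Ordinal hy.
rewrite -[x]/(nat_of_ord i) -[y]/(nat_of_ord j) !mxnE -mulmxE mxE.
by apply: eq_bigr => z _; rewrite !mxnE.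
Qed.

Lemma mxn1 (R : pzRingType) p x y : (x < p)%N -> (y < p)%N ->
  mxn (1 : 'M[R]_p) x y = (x == y)%:R.
Proof.
move=> hx hy; rewrite (mxn_ord _ hx hy) mxE //.
Qed.

Lemma ut_mul (R : pzRingType) p (A B : 'M[R]_p) :
  upper_tri A -> upper_tri B -> upper_tri (A * B).
Proof.
move=> hA hB i j hji; rewrite -mulmxE mxE big1 // => z _.
case: (ltnP z i) => hz; first by rewrite hA // mul0r.
by rewrite hB ?mulr0 // (leq_trans hji hz).
Qed.

Lemma ut1 (R : pzRingType) p : upper_tri (1 : 'M[R]_p).
Proof. by move=> i j hji; rewrite mxE -val_eqE /= gtn_eqF. Qed.

Lemma ut0 (R : pzRingType) p : upper_tri (0 : 'M[R]_p).
Proof. by move=> i j _; rewrite mxE. Qed.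

Lemma ut_add (R : pzRingType) p (A B : 'M[R]_p) :
  upper_tri A -> upper_tri B -> upper_tri (A + B).
Proof. by move=> hA hB i j h; rewrite mxE hA // hB // addr0. Qed.

Lemma ut_exp (R : pzRingType) p (A : 'M[R]_p) k : upper_tri A -> upper_tri (A ^+ k).
Proof.
move=> hA; elim: k => [|k IH]; first by rewrite expr0; exact: ut1.
by rewrite exprS; apply: ut_mul.
Qed.

Lemma ut_sum (R : pzRingType) p I (r : seq I) (F : I -> 'M[R]_p) :
  (forall k, upper_tri (F k)) -> upper_tri (\sum_(k <- r) F k).
Proof.
move=> h; apply: (big_ind (@upper_tri R p)); [exact: ut0|exact: ut_add|by []].
Qed.

Lemma ut_scale (R : comPzRingType) p (a : R) (A : 'M[R]_p) :
  upper_tri A -> upper_tri (a *: A).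
Proof. by move=> hA i j h; rewrite mxE hA // mulr0. Qed.

Lemma ut_peval (K : fieldType) p (g : {poly K}) (A : 'M[K]_p) :
  upper_tri A -> upper_tri (peval_mx g A).
Proof. by move=> hA; apply: ut_sum => k; apply: ut_scale; apply: ut_exp. Qed.

Lemma sum_window (R : pzRingType) (F : nat -> R) p s c d : (c <= d)%N -> (s + d < p)%N ->
  (forall z, (z < s + c)%N -> F z = 0) -> (forall z, (s + d < z)%N -> F z = 0) ->
  \sum_(z < p) F z = \sum_(c <= e < d.+1) F (s + e).
Proof.
move=> hcd hp h1 h2.
have hcp : (s + c <= p)%N.
  by apply: leq_trans (ltnW hp); rewrite leq_add2l.
rewrite -(big_mkord xpredT F) (big_cat_nat (leq0n (s + c)) hcp).
rewrite big_nat big1 ?add0r; last by move=> z /andP[_ hz]; apply: h1.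
have hcd' : (s + c <= (s + d).+1)%N by rewrite (leq_trans _ (leqnSn _)) // leq_add2l.
rewrite (big_cat_nat hcd' hp).
have -> : \sum_((s+d).+1 <= z < p) F z = 0.
  by rewrite big_nat big1 // => z /andP[hz _]; apply: h2.
rewrite Monoid.mul1m Monoid.mulm1 [(s + c)%N]addnC big_addn.
have -> : ((s + d).+1 - s = d.+1)%N by rewrite -addnS addKn.
by apply: eq_bigr => i _; rewrite addnC.
Qed.

Lemma mxn_expX (R : pzRingType) p q (A : 'M[R]_p) (B : 'M[R]_q) s t w :
  upper_tri A -> upper_tri B -> (s + w <= p)%N -> (t + w <= q)%N ->
  (forall c d, (c <= d)%N -> (d < w)%N -> mxn A (s + c) (s + d) = mxn B (t + c) (t + d)) ->
  forall k c d, (c <= d)%N -> (d < w)%N ->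
  mxn (A ^+ k) (s + c) (s + d) = mxn (B ^+ k) (t + c) (t + d).
Proof.
move=> hA hB hsp htq hAB k; elim: k => [|k IH] c d hcd hdw.
  have hsd : (s + d < p)%N by apply: leq_trans hsp; rewrite ltn_add2l.
  have hsc : (s + c < p)%N by apply: leq_trans hsd; rewrite ltnS leq_add2l.
  have htd : (t + d < q)%N by apply: leq_trans htq; rewrite ltn_add2l.
  have htc : (t + c < q)%N by apply: leq_trans htd; rewrite ltnS leq_add2l.
  by rewrite !expr0 mxn1 // mxn1 // !eqn_add2l.
have hsd : (s + d < p)%N by apply: leq_trans hsp; rewrite ltn_add2l.
have hsc : (s + c < p)%N by apply: leq_trans hsd; rewrite ltnS leq_add2l.
have htd : (t + d < q)%N by apply: leq_trans htq; rewrite ltn_add2l.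
have htc : (t + c < q)%N by apply: leq_trans htd; rewrite ltnS leq_add2l.
rewrite !exprSr mxn_mul // mxn_mul //.
rewrite (sum_window (F := fun z : nat => mxn (A ^+ k) (s + c) z * mxn A z (s + d)) hcd hsd).
- rewrite (sum_window (F := fun z : nat => mxn (B ^+ k) (t + c) z * mxn B z (t + d)) hcd htd).
  + apply: eq_big_nat => e /andP[hce hed].
    have hew : (e < w)%N by apply: leq_trans hdw.
    rewrite IH // hAB //.
  + by move=> z hz; rewrite mxn_ut ?mul0r //; apply: ut_exp.
  + by move=> z hz; rewrite (mxn_ut hB hz) mulr0.
- by move=> z hz; rewrite mxn_ut ?mul0r //; apply: ut_exp.
- by move=> z hz; rewrite (mxn_ut hA hz) mulr0.
Qed.

Lemma mxn_peval (K : fieldType) p (g : {poly K}) (A : 'M[K]_p) x y :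
  (x < p)%N -> (y < p)%N ->
  mxn (peval_mx g A) x y = \sum_(k < size g) g`_k * mxn (A ^+ k) x y.
Proof.
move=> hx hy; pose i := Ordinal hx; pose j := Ordinal hy.
rewrite -[x]/(nat_of_ord i) -[y]/(nat_of_ord j) !mxnE /peval_mx summxE.
by apply: eq_bigr => k _; rewrite mxE mxnE.
Qed.

Lemma mxn_pevalX (K : fieldType) p q (g : {poly K}) (A : 'M[K]_p) (B : 'M[K]_q) s t w :
  upper_tri A -> upper_tri B -> (s + w <= p)%N -> (t + w <= q)%N ->
  (forall c d, (c <= d)%N -> (d < w)%N -> mxn A (s + c) (s + d) = mxn B (t + c) (t + d)) ->
  forall c d, (c <= d)%N -> (d < w)%N ->
  mxn (peval_mx g A) (s + c) (s + d) = mxn (peval_mx g B) (t + c) (t + d).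
Proof.
move=> hA hB hsp htq hAB c d hcd hdw.
have hsd : (s + d < p)%N by apply: leq_trans hsp; rewrite ltn_add2l.
have hsc : (s + c < p)%N by apply: leq_trans hsd; rewrite ltnS leq_add2l.
have htd : (t + d < q)%N by apply: leq_trans htq; rewrite ltn_add2l.
have htc : (t + c < q)%N by apply: leq_trans htd; rewrite ltnS leq_add2l.
rewrite !mxn_peval //; apply: eq_bigr => k _.
by rewrite (mxn_expX hA hB hsp htq hAB).
Qed.

Definition shiftm (R : pzRingType) q (B : 'M[R]_q) (s t w p : nat) : 'M[R]_p :=
  \matrix_(x < p, y < p)
    if [&& (s <= x)%N, (s <= y)%N, (x < s + w)%N & (y < s + w)%N]
    then mxn B (x - s + t) (y - s + t) else 0.

Lemma shiftm_ut (R : pzRingType) q (B : 'M[R]_q) s t w p :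
  upper_tri B -> upper_tri (shiftm B s t w p).
Proof.
move=> hB x y hyx; rewrite mxE; case: ifP => // /and4P[hx hy _ _].
by apply: mxn_ut => //; rewrite ltn_add2r ltn_sub2rE.
Qed.

Lemma mxn_shiftm (R : pzRingType) q (B : 'M[R]_q) s t w p c d :
  (c < w)%N -> (d < w)%N -> (s + c < p)%N -> (s + d < p)%N ->
  mxn (shiftm B s t w p) (s + c) (s + d) = mxn B (t + c) (t + d).
Proof.
move=> hc hd hsc hsd; rewrite (mxn_ord _ hsc hsd) mxE /=.
rewrite !leq_addr !ltn_add2l hc hd /= !addKn.
by rewrite [(c + t)%N]addnC [(d + t)%N]addnC.
Qed.

Lemma mxn_shiftm_row0 (R : pzRingType) q (B : 'M[R]_q) s t w p x z :
  (x < s)%N -> mxn (shiftm B s t w p) x z = 0.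
Proof.
move=> hx; case: (ltnP x p) => hxp; last exact: mxn_outl.
case: (ltnP z p) => hzp; last exact: mxn_outr.
by rewrite (mxn_ord _ hxp hzp) mxE /= leqNgt hx.
Qed.

Lemma mxn_shiftm_col0 (R : pzRingType) q (B : 'M[R]_q) s t w p x z :
  (s + w <= z)%N -> mxn (shiftm B s t w p) x z = 0.
Proof.
move=> hz; case: (ltnP x p) => hxp; last exact: mxn_outl.
case: (ltnP z p) => hzp; last exact: mxn_outr.
by rewrite (mxn_ord _ hxp hzp) mxE /= [(z < s + w)%N]ltnNge hz !andbF.
Qed.

Lemma peval_row0 (K : fieldType) p (g : {poly K}) (C : 'M[K]_p) x y :
  x != y -> (forall z, mxn C x z = 0) -> mxn (peval_mx g C) x y = 0.
Proof.
move=> hxy h0; case: (ltnP x p) => hxp; last exact: mxn_outl.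
case: (ltnP y p) => hyp; last exact: mxn_outr.
rewrite mxn_peval // big1 // => -[[|k] hk] _ /=.
  by rewrite expr0 mxn1 // (negbTE hxy) mulr0.
by rewrite exprS mxn_mul // big1 ?mulr0 // => z _; rewrite h0 mul0r.
Qed.

Lemma peval_col0 (K : fieldType) p (g : {poly K}) (C : 'M[K]_p) x y :
  x != y -> (forall z, mxn C z y = 0) -> mxn (peval_mx g C) x y = 0.
Proof.
move=> hxy h0; case: (ltnP x p) => hxp; last exact: mxn_outl.
case: (ltnP y p) => hyp; last exact: mxn_outr.
rewrite mxn_peval // big1 // => -[[|k] hk] _ /=.
  by rewrite expr0 mxn1 // (negbTE hxy) mulr0.
by rewrite exprSr mxn_mul // big1 ?mulr0 // => z _; rewrite h0 mulr0.
Qed.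

Lemma inD0 (D : idomainType) : inD (0 : {fraction D}).
Proof. by exists 0; rewrite tofrac0. Qed.

Lemma inD_add (D : idomainType) (x y : {fraction D}) : inD x -> inD y -> inD (x + y).
Proof. by move=> [a ->] [b ->]; exists (a + b); rewrite tofracD. Qed.

Lemma inD_sub (D : idomainType) (x y : {fraction D}) : inD x -> inD y -> inD (x - y).
Proof. by move=> [a ->] [b ->]; exists (a - b); rewrite tofracB. Qed.

Lemma inD_sum (D : idomainType) I (r : seq I) (P : pred I) (F : I -> {fraction D}) :
  (forall i, P i -> inD (F i)) -> inD (\sum_(i <- r | P i) F i).
Proof. by move=> h; apply: big_ind => //; [exact: inD0|exact: inD_add]. Qed.

Lemma inD_mxn (D : idomainType) p (C : 'M[{fraction D}]_p) x y :
  inTD C -> inD (mxn C x y).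
Proof.
move=> [_ hC]; rewrite /mxn; case: insub => [i|]; last exact: inD0.
case: insub => [j|]; [exact: hC | exact: inD0].
Qed.

Lemma inTD_shiftm (D : idomainType) q (B : 'M[{fraction D}]_q) s t w p :
  inTD B -> inTD (shiftm B s t w p).
Proof.
move=> hB; split; first by apply: shiftm_ut; case: hB.
move=> i j; rewrite mxE; case: ifP => _; [exact: inD_mxn | exact: inD0].
Qed.

Lemma peval_window_inD (D : idomainType) p (C : 'M[{fraction D}]_p) g s w c d :
  inTD C -> (s + w <= p)%N -> IntK w g -> (c <= d)%N -> (d < w)%N ->
  inD (mxn (peval_mx g C) (s + c) (s + d)).
Proof.
move=> hC hsw hg hcd hdw.
pose B := shiftm C 0 s w w.
have hB : inTD B by apply: inTD_shiftm.
rewrite (@mxn_pevalX _ _ _ g C B s 0 w hC.1 hB.1 hsw (leqnn _)) //.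
  by apply: inD_mxn; apply: hg.
move=> c' d' hcd' hd'w.
have hc'w : (c' < w)%N by apply: leq_ltn_trans hcd' hd'w.
by rewrite /B mxn_shiftm.
Qed.

Lemma peval_shift_eq (K : fieldType) p q (B : 'M[K]_q) (g : {poly K}) s a b :
  upper_tri B -> (a <= b)%N -> (b < q)%N -> (s + (b - a) < p)%N ->
  mxn (peval_mx g (shiftm B s a (b - a).+1 p)) s (s + (b - a)) = mxn (peval_mx g B) a b.
Proof.
move=> hB hab hbq hsp.
have hsw : (s + (b - a).+1 <= p)%N by rewrite addnS.
have haw : (a + (b - a).+1 <= q)%N by rewrite addnS subnKC.
have H := @mxn_pevalX _ _ _ g _ B s a (b - a).+1 (@shiftm_ut _ _ B s a (b - a).+1 p hB) hB
  hsw haw _ 0 (b - a) (leq0n _) (ltnSn _).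
rewrite !addn0 subnKC // in H; apply: H.
move=> c d hcd hd; rewrite mxn_shiftm //.
- by apply: leq_ltn_trans hd.
- by apply: leq_trans hsw; rewrite ltn_add2l (leq_ltn_trans hcd hd).
- by apply: leq_trans hsw; rewrite ltn_add2l.
Qed.

Lemma peval_widen (K : fieldType) p (g : {poly K}) (C : 'M[K]_p) m :
  (size g <= m)%N -> peval_mx g C = \sum_(k < m) g`_k *: C ^+ k.
Proof.
move=> hm; rewrite /peval_mx (big_ord_widen _ (fun k => g`_k *: C ^+ k) hm) big_mkcond.
apply: eq_bigr => k _; case: ifP => // /negbT; rewrite -leqNgt => hk.
by rewrite nth_default // scale0r.
Qed.

Lemma peval_poly0 (K : fieldType) p (C : 'M[K]_p) : peval_mx 0 C = 0.
Proof. by rewrite /peval_mx size_poly0 big_ord0. Qed.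

Lemma entry_poly0 (K : fieldType) n (f : {poly 'M[K]_n.+1}) (i h : 'I_n.+1) :
  (forall k, upper_tri f`_k) -> (h < i)%N -> entry_poly f i h = 0.
Proof.
move=> Hf hhi; apply/polyP => k; rewrite /entry_poly coef_poly coef0.
by case: ifP => // _; apply: Hf.
Qed.

Lemma rsubst_entry (K : fieldType) n (f : {poly 'M[K]_n.+1}) (C : 'M[K]_n.+1) i j :
  rsubst f C i j = \sum_(h < n.+1) peval_mx (entry_poly f i h) C h j.
Proof.
rewrite /rsubst summxE.
under [RHS]eq_bigr => h _ do rewrite (@peval_widen _ _ _ C (size f) (size_poly _ _)) summxE.
rewrite exchange_big; apply: eq_bigr => k _.
rewrite -mulmxE mxE; apply: eq_bigr => h _; by rewrite mxE coef_poly ltn_ord.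
Qed.

Lemma lsubst_entry (K : fieldType) n (f : {poly 'M[K]_n.+1}) (C : 'M[K]_n.+1) i j :
  lsubst f C i j = \sum_(h < n.+1) peval_mx (entry_poly f h j) C i h.
Proof.
rewrite /lsubst summxE.
under [RHS]eq_bigr => h _ do rewrite (@peval_widen _ _ _ C (size f) (size_poly _ _)) summxE.
rewrite exchange_big; apply: eq_bigr => k _.
rewrite -mulmxE mxE; apply: eq_bigr => h _; by rewrite mxE coef_poly ltn_ord mulrC.
Qed.

Lemma rsubst_ut (K : fieldType) n (f : {poly 'M[K]_n.+1}) (C : 'M[K]_n.+1) :
  (forall k, upper_tri f`_k) -> upper_tri C -> upper_tri (rsubst f C).
Proof. by move=> Hf hC; apply: ut_sum => k; apply: ut_mul => //; apply: ut_exp. Qed.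

Lemma lsubst_ut (K : fieldType) n (f : {poly 'M[K]_n.+1}) (C : 'M[K]_n.+1) :
  (forall k, upper_tri f`_k) -> upper_tri C -> upper_tri (lsubst f C).
Proof. by move=> Hf hC; apply: ut_sum => k; apply: ut_mul => //; apply: ut_exp. Qed.

Theorem corollary5p3 (D : idomainType) (n : nat)
  (f : {poly 'M[{fraction D}]_n.+1})
  (Hf : forall k : nat, upper_tri f`_k) :
  ((forall C : 'M[{fraction D}]_n.+1, inTD C -> inTD (rsubst f C)) <->
   (forall i j : 'I_n.+1, (i <= j)%N -> IntK (n.+1 - j) (entry_poly f i j)))
  /\
  ((forall C : 'M[{fraction D}]_n.+1, inTD C -> inTD (lsubst f C)) <->
   (forall i j : 'I_n.+1, (i <= j)%N -> IntK i.+1 (entry_poly f i j))).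
Proof.
split; split.
- move=> H.
  suff hs : forall d (j : 'I_n.+1), (n.+1 - j <= d)%N -> forall i : 'I_n.+1,
      (i <= j)%N -> IntK (n.+1 - j) (entry_poly f i j).
    by move=> i j hij; apply: (hs (n.+1 - j)%N).
  elim=> [|d IH] j hj i hij.
    by move: hj (ltn_ord j); lia.
  move=> B hB; split; first by apply: ut_peval; case: hB.
  move=> a b.
  case: (ltnP b a) => hab.
    by rewrite (ut_peval _ hB.1 hab); apply: inD0.
  have hbm := ltn_ord b.
  have hy : (j + (b - a) < n.+1)%N by move: hbm (ltn_ord j); lia.
  pose C := shiftm B j a (b - a).+1 n.+1.
  have hC : inTD C by apply: inTD_shiftm.
  have [_ hR] := H C hC.
  have hRi := hR i (Ordinal hy).
  rewrite rsubst_entry (bigD1 j) //= in hRi.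
  rewrite -mxnE -(@peval_shift_eq _ n.+1 _ B _ j a b hB.1 hab hbm hy).
  rewrite -/C (mxnE _ j (Ordinal hy)).
  set T := peval_mx _ C j _ in hRi *.
  have hrest : inD (\sum_(h < n.+1 | h != j)
      peval_mx (entry_poly f i h) C h (Ordinal hy)).
    apply: inD_sum => h hhj; rewrite -(mxnE _ h (Ordinal hy)) /=.
    case: (ltnP h j) => hhj'.
      rewrite peval_row0; first exact: inD0.
        by rewrite neq_ltn (leq_trans hhj' (leq_addr _ _)).
      by move=> z; apply: mxn_shiftm_row0.
    case: (ltnP (j + (b - a)) h) => hh2.
      rewrite mxn_ut //; first exact: inD0.
      by apply: ut_peval; apply: shiftm_ut; case: hB.
    have hjh : (j < h)%N.
      rewrite ltn_neqAle hhj' andbT; apply: contra hhj => /eqP E.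
      by apply/eqP; apply: ord_inj; rewrite E.
    have hh := ltn_ord h.
    have hint : IntK (n.+1 - h) (entry_poly f i h).
      by apply: IH; [move: hj hjh hh; lia | move: hij hjh; lia].
    have := @peval_window_inD D n.+1 C (entry_poly f i h) h (n.+1 - h) 0 (j + (b - a) - h)
      hC _ hint (leq0n _) _.
    rewrite addn0 (subnKC (ltnW hh)) (subnKC hh2); apply=> //; lia.
  by have := inD_sub hRi hrest; rewrite addrK.
- move=> H C hC; split; first by apply: rsubst_ut => //; case: hC.
  move=> i j; rewrite rsubst_entry; apply: inD_sum => h _.
  case: (ltnP h i) => hhi.
    by rewrite entry_poly0 // peval_poly0 mxE; apply: inD0.
  case: (ltnP j h) => hjh.
    by rewrite (ut_peval _ hC.1 hjh); apply: inD0.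
  rewrite -mxnE.
  have hh := ltn_ord h; have hj := ltn_ord j.
  have := @peval_window_inD D n.+1 C (entry_poly f i h) h (n.+1 - h) 0 (j - h)
      hC _ (H i h hhi) (leq0n _) _.
  rewrite addn0 (subnKC (ltnW hh)) (subnKC hjh); apply=> //; lia.
- move=> H.
  suff hs : forall d (i : 'I_n.+1), (i < d)%N -> forall j : 'I_n.+1,
      (i <= j)%N -> IntK i.+1 (entry_poly f i j).
    by move=> i j hij; apply: (hs i.+1).
  elim=> [|d IH] i hi j hij; first by [].
  move=> B hB; split; first by apply: ut_peval; case: hB.
  move=> a b.
  case: (ltnP b a) => hab.
    by rewrite (ut_peval _ hB.1 hab); apply: inD0.
  have hbi := ltn_ord b.
  have hin := ltn_ord i.
  have hX : (i - (b - a) + (b - a) = i)%N by move: hbi; lia.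
  have hXN : (i - (b - a) < n.+1)%N by move: hin; lia.
  have hy : (i - (b - a) + (b - a) < n.+1)%N by rewrite hX.
  pose C := shiftm B (i - (b - a)) a (b - a).+1 n.+1.
  have hC : inTD C by apply: inTD_shiftm.
  have [_ hR] := H C hC.
  have hRi := hR (Ordinal hXN) j.
  rewrite lsubst_entry (bigD1 i) //= in hRi.
  rewrite -mxnE -(@peval_shift_eq _ n.+1 _ B _ (i - (b - a)) a b hB.1 hab hbi hy).
  rewrite -/C hX (mxnE _ (Ordinal hXN) i).
  set T := peval_mx _ C _ i in hRi *.
  have hrest : inD (\sum_(h < n.+1 | h != i)
      peval_mx (entry_poly f h j) C (Ordinal hXN) h).
    apply: inD_sum => h hhi; rewrite -(mxnE _ (Ordinal hXN) h) /=.
    case: (ltnP h (i - (b - a))) => hh1.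
      rewrite mxn_ut //; first exact: inD0.
      by apply: ut_peval; apply: shiftm_ut; case: hB.
    case: (ltnP i h) => hh2.
      rewrite peval_col0; first exact: inD0.
        by rewrite neq_ltn; apply/orP; left; move: hh2 hX; lia.
      by move=> z; apply: mxn_shiftm_col0; move: hh2 hX; lia.
    have hhi' : (h < i)%N.
      rewrite ltn_neqAle hh2 andbT; apply: contra hhi => /eqP E.
      by apply/eqP; apply: ord_inj; rewrite E.
    have hh := ltn_ord h.
    have hint : IntK h.+1 (entry_poly f h j).
      by apply: IH; [move: hi hhi'; lia | move: hij hhi'; lia].
    have := @peval_window_inD D n.+1 C (entry_poly f h j) 0 h.+1 (i - (b - a)) h
      hC hh hint hh1 (ltnSn _).
    by rewrite !add0n.
  by have := inD_sub hRi hrest; rewrite addrK.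
- move=> H C hC; split; first by apply: lsubst_ut => //; case: hC.
  move=> i j; rewrite lsubst_entry; apply: inD_sum => h _.
  case: (ltnP j h) => hjh.
    by rewrite entry_poly0 // peval_poly0 mxE; apply: inD0.
  case: (ltnP h i) => hhi.
    by rewrite (ut_peval _ hC.1 hhi); apply: inD0.
  rewrite -mxnE.
  have hh := ltn_ord h.
  have := @peval_window_inD D n.+1 C (entry_poly f h j) 0 h.+1 i h
      hC hh (H h j hjh) hhi (ltnSn _).
  by rewrite !add0n.
Qed.
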